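(* For all $0<\varepsilon<1/8$, for all sufficiently large $\ell>0$, for all $x,y\in\bar B(0,2\ell)$ with $x\neq y$ and all $\ell'$ with $\|x-y\|\le\ell'\le2\ell$, there exist $\hat x,\hat y\in\bar B(0,3\ell)\cap\mathbb Z^d$ with $\|\hat x-\hat y\|\ge\|x-y\|$ such that every element of $\mathcal G_1(x,y,\ell')$ is included in an element of $\mathcal G_1(\hat x,\hat y,\ell'+8\varepsilon\ell)$.
   Context: Fix $d\ge2$; Euclidean norm $\|\cdot\|$, inner product $\langle\cdot,\cdot\rangle$; $\bar B(x,r)$ is the closed Euclidean ball. Paths: finite sequences $(x_0,\dots,x_r)$ in $\mathbb R^d$, length $\sum\|x_i-x_{i+1}\|$. Animals: finite connected graphs $\xi=(V,E)$ with $V\subseteq\mathbb R^d$, length $\sum_{\{x,y\}\in E}\|x-y\|$; inclusion of animals is inclusion as subgraphs. $\mathcal P(x,y,\ell)$: paths from $x$ to $y$ of length $\le\ell$; $\mathcal A^*(x,y,\ell)$: animals empty or with $\|\xi\|+\mathrm d(x,V)+\mathrm d(y,V)\le\ell$. $\mathcal G$ denotes either $\mathcal P$ or $\mathcal A^*$. For $x\ne y$, $D_1(x,y)=\{z:\langle z-x,y-x\rangle\ge0,\ \langle z-y,x-y\rangle\ge0\}$ and $\mathcal G_1(x,y,\ell)=\{\xi\in\mathcal G(x,y,\ell):\xi\subseteq D_1(x,y)\}$. *)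

(* Defs.v *)
From HB Require Import structures.
From mathcomp Require Import all_boot all_order all_algebra.
From mathcomp Require Import reals.
Set Implicit Arguments. Unset Strict Implicit. Unset Printing Implicit Defensive.
Import Order.TTheory GRing.Theory Num.Theory.
Local Open Scope ring_scope.

Section Defs.
Variables (R : realType) (d : nat).
Notation pt := 'rV[R]_d.

Definition dotp (u v : pt) : R := \sum_(i < d) u 0 i * v 0 i.
Definition enorm (u : pt) : R := Num.sqrt (dotp u u).

Definition cball (c : pt) (r : R) (z : pt) : bool := enorm (z - c) <= r.

Definition is_lattice (z : pt) : bool := [forall i : 'I_d, z 0 i \is a Num.int].

Definition D1 (x y : pt) (z : pt) : bool :=
  (0 <= dotp (z - x) (y - x)) && (0 <= dotp (z - y) (x - y)).

(* a path (x_0,...,x_r) is a nonempty sequence of points *)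
Definition path_len (p : seq pt) : R :=
  \sum_(e <- zip p (behead p)) enorm (e.1 - e.2).

Definition path_edges (p : seq pt) : seq (pt * pt) := zip p (behead p).

Definition inP (x y : pt) (l : R) (p : seq pt) : Prop :=
  [/\ p != [::], head x p = x, last x p = y & path_len p <= l].

(* inclusion of paths, viewed as graphs (vertices + edges between
   consecutive points, edges unoriented) *)
Definition path_incl (p q : seq pt) : Prop :=
  {subset p <= q} /\
  forall e, e \in path_edges p ->
    (e \in path_edges q) \/ ((e.2, e.1) \in path_edges q).

Definition inP1 (x y : pt) (l : R) (p : seq pt) : Prop :=
  inP x y l p /\ all (D1 x y) p.

(* an animal: vertex list V and edge list E (unoriented edges, stored once) *)
Record animal := Animal { aV : seq pt; aE : seq (pt * pt) }.

Definition adj (E : seq (pt * pt)) (a b : pt) : bool :=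
  ((a, b) \in E) || ((b, a) \in E).

Definition is_animal (A : animal) : Prop :=
  [/\ uniq (aV A),
      (forall e, e \in aE A -> [/\ e.1 \in aV A, e.2 \in aV A & e.1 != e.2]),
      uniq (aE A) /\ (forall e, e \in aE A -> (e.2, e.1) \notin aE A) &
      forall u v, u \in aV A -> v \in aV A ->
        exists s : seq pt, path (adj (aE A)) u s /\ last u s = v].

Definition animal_len (A : animal) : R :=
  \sum_(e <- aE A) enorm (e.1 - e.2).

(* d(x, V) for nonempty V *)
Definition dist_set (x : pt) (V : seq pt) : R :=
  \big[Order.min/enorm (x - head x V)]_(v <- V) enorm (x - v).

Definition inA (x y : pt) (l : R) (A : animal) : Prop :=
  is_animal A /\
  (aV A = [::] \/ animal_len A + dist_set x (aV A) + dist_set y (aV A) <= l).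

Definition animal_incl (A B : animal) : Prop :=
  {subset aV A <= aV B} /\
  forall e, e \in aE A -> adj (aE B) e.1 e.2.

Definition inA1 (x y : pt) (l : R) (A : animal) : Prop :=
  inA x y l A /\ all (D1 x y) (aV A).

End Defs.

(* Main.v *)
Require Import Defs.
From HB Require Import structures.
From mathcomp Require Import all_boot all_order all_algebra.
From mathcomp Require Import reals ring lra.
Import Order.TTheory GRing.Theory Num.Theory.
Local Open Scope ring_scope.
Set Implicit Arguments. Unset Strict Implicit.

Section Vec.
Variables (R : realType) (d : nat).
Notation pt := 'rV[R]_d.
Implicit Types u v w : pt.

Lemma dotpC u v : dotp u v = dotp v u.
Proof. by apply: eq_bigr => i _; rewrite mulrC. Qed.

Lemma dotpDl u v w : dotp (u + v) w = dotp u w + dotp v w.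
Proof. by rewrite /dotp -big_split; apply: eq_bigr => i _; rewrite !mxE mulrDl. Qed.

Lemma dotpNl u w : dotp (- u) w = - dotp u w.
Proof. by rewrite /dotp -sumrN; apply: eq_bigr => i _; rewrite !mxE mulNr. Qed.

Lemma dotpBl u v w : dotp (u - v) w = dotp u w - dotp v w.
Proof. by rewrite dotpDl dotpNl. Qed.

Lemma dotpZl a u w : dotp (a *: u) w = a * dotp u w.
Proof. by rewrite /dotp mulr_sumr; apply: eq_bigr => i _; rewrite !mxE mulrA. Qed.

Lemma dotpDr u v w : dotp w (u + v) = dotp w u + dotp w v.
Proof. by rewrite dotpC dotpDl !(dotpC w). Qed.
Lemma dotpNr u w : dotp w (- u) = - dotp w u.
Proof. by rewrite dotpC dotpNl dotpC. Qed.
Lemma dotpBr u v w : dotp w (u - v) = dotp w u - dotp w v.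
Proof. by rewrite dotpDr dotpNr. Qed.
Lemma dotpZr a u w : dotp w (a *: u) = a * dotp w u.
Proof. by rewrite dotpC dotpZl dotpC. Qed.

Lemma dotp_ge0 u : 0 <= dotp u u.
Proof. by apply: sumr_ge0 => i _; rewrite -expr2 sqr_ge0. Qed.

Lemma enorm_ge0 u : 0 <= enorm u.
Proof. exact: sqrtr_ge0. Qed.

Lemma enorm_sq u : enorm u ^+ 2 = dotp u u.
Proof. by rewrite /enorm sqr_sqrtr // dotp_ge0. Qed.

Lemma CS2 u v : dotp u v ^+ 2 <= dotp u u * dotp v v.
Proof.
have H : forall lam, 0 <= dotp u u + 2 * lam * dotp u v + lam ^+ 2 * dotp v v.
  move=> lam; have := dotp_ge0 (u + lam *: v).
  rewrite !dotpDl !dotpDr !dotpZl !dotpZr (dotpC v u).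
  by move=> h; apply: le_trans h _; rewrite le_eqVlt; apply/orP; left; apply/eqP; ring.
have [vv0|vvp] := eqVneq (dotp v v) 0.
  rewrite vv0 mulr0.
  have [b0|bn] := eqVneq (dotp u v) 0; first by rewrite b0 expr0n.
  have h1 := H (- (dotp u u + 1) / (2 * dotp u v)).
  rewrite vv0 mulr0 addr0 in h1.
  have : 2 * (- (dotp u u + 1) / (2 * dotp u v)) * dotp u v = - (dotp u u + 1).
    by field.
  lra.
have vvp' : 0 < dotp v v by rewrite lt_def vvp dotp_ge0.
have := H (- dotp u v / dotp v v).
set a := dotp u u; set b := dotp u v; set c := dotp v v => h.
have : 0 <= (a + 2 * (- b / c) * b + (- b / c) ^+ 2 * c) * c by rewrite mulr_ge0 // ltW.
have -> : (a + 2 * (- b / c) * b + (- b / c) ^+ 2 * c) * c = a * c - b ^+ 2.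
  by field; rewrite /c.
by rewrite subr_ge0.
Qed.

Lemma CS u v : dotp u v <= enorm u * enorm v.
Proof.
have h := CS2 u v.
have hn : 0 <= enorm u * enorm v by rewrite mulr_ge0 // enorm_ge0.
have e : (enorm u * enorm v) ^+ 2 = dotp u u * dotp v v by rewrite exprMn !enorm_sq.
have [hp|hn'] := lerP (dotp u v) 0; first by apply: le_trans hp hn.
by rewrite -(ler_pXn2r (n:=2)) ?nnegrE ?(ltW hn') // e.
Qed.

Lemma enormN u : enorm (- u) = enorm u.
Proof. by rewrite /enorm dotpNl dotpNr opprK. Qed.

Lemma CSabs u v : - (enorm u * enorm v) <= dotp u v.
Proof. have := CS (- u) v. rewrite dotpNl enormN => h. lra. Qed.

Lemma enormB u v : enorm (u - v) = enorm (v - u).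
Proof. by rewrite -enormN opprB. Qed.

Lemma enorm_le_sq u c : 0 <= c -> dotp u u <= c ^+ 2 -> enorm u <= c.
Proof. move=> c0 h; by rewrite -(ler_pXn2r (n:=2)) ?nnegrE ?enorm_sq ?enorm_ge0. Qed.

Lemma enormD u v : enorm (u + v) <= enorm u + enorm v.
Proof.
apply: enorm_le_sq; first by rewrite addr_ge0 ?enorm_ge0.
rewrite dotpDl !dotpDr (dotpC v u).
have := CS u v. have := enorm_sq u. have := enorm_sq v. nra.
Qed.

Lemma enormZ a u : enorm (a *: u) = `|a| * enorm u.
Proof. by rewrite /enorm dotpZl dotpZr mulrA -expr2 sqrtrM ?sqr_ge0 // sqrtr_sqr. Qed.

Lemma enorm_tri u v w : enorm (u - w) <= enorm (u - v) + enorm (v - w).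
Proof. by have := enormD (u - v) (v - w); rewrite addrA subrK. Qed.

End Vec.

Section Geo.
Variables (R : realType) (d : nat).
Notation pt := 'rV[R]_d.
Implicit Types u v w x y z : pt.

Lemma enorm1 u : dotp u u = 1 -> enorm u = 1.
Proof. by rewrite /enorm => ->; rewrite sqrtr1. Qed.

Lemma half_D1 x y xh yh z u (n t del M : R) :
  0 < n -> x - y = n *: u -> dotp u u = 1 ->
  enorm (xh - (x + t *: u)) <= del -> enorm (yh - (y - t *: u)) <= del ->
  enorm (z - x) <= M -> 0 <= dotp (z - x) (y - x) -> 0 <= del -> del <= t ->
  del * M <= t ^+ 2 - 2 * t * del - del ^+ 2 ->
  0 <= dotp (z - xh) (yh - xh).
Proof.
move=> n0 hu u1 h1 h2 hM hD del0 delt hq.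
set e1 := xh - (x + t *: u) in h1; set e2 := yh - (y - t *: u) in h2.
have E1 : yh - xh = (- (n + 2 * t)) *: u + (e2 - e1).
  apply/rowP => i; have := congr1 (fun v : pt => v 0 i) hu.
  rewrite /e1 /e2 !mxE => hi. lra.
have E2 : z - xh = (z - x) - t *: u - e1.
  apply/rowP => i; rewrite /e1 !mxE. lra.
have E3 : y - x = (- n) *: u.
  by rewrite scaleNr -hu opprB.
have E4 : z - xh = (z - x) + (- (t *: u) - e1).
  by rewrite E2 addrA.
rewrite E1 dotpDr dotpZr E2.
have -> : dotp (z - x - t *: u - e1) u = dotp (z - x) u - t - dotp e1 u.
  by rewrite !dotpBl dotpZl u1 mulr1.
rewrite E3 dotpZr in hD.
set P := dotp (z - x) u in hD *.
have P0 : P <= 0 by nra.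
have Q := CSabs e1 u; rewrite (enorm1 u1) mulr1 in Q.
have S := CSabs (z - xh) (e2 - e1).
rewrite E2 in S.
have A0 := enorm_ge0 (z - x - t *: u - e1).
have B0 := enorm_ge0 (e2 - e1).
have HA : enorm (z - x - t *: u - e1) <= M + t + del.
  rewrite -addrA; apply: le_trans (enormD _ _) _.
  have := enormD (- (t *: u)) (- e1); rewrite !enormN enormZ (enorm1 u1) mulr1.
  have e0 := enorm_ge0 e1.
  have : `|t| = t by apply/ger0_norm; lra.
  lra.
have HB : enorm (e2 - e1) <= 2 * del.
  have := enormD e2 (- e1); rewrite enormN; lra.
set A := enorm _ in A0 HA S; set B := enorm _ in B0 HB S.
set Qd := dotp e1 u in Q *.
set Sd := dotp _ (e2 - e1) in S *.
have hAB : A * B <= (M + t + del) * (2 * del) by apply: ler_pM.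
have K0 : t - del <= t + Qd - P by lra.
have h3 : 2 * t * (t - del) <= (n + 2 * t) * (t + Qd - P).
  have : 0 <= n * (t + Qd - P) by apply: mulr_ge0; lra.
  have : 2 * t * (t - del) <= 2 * t * (t + Qd - P) by apply: ler_wpM2l; lra.
  lra.
have -> : - (n + 2 * t) * (P - t - Qd) = (n + 2 * t) * (t + Qd - P) by ring.
nra.
Qed.
End Geo.

Section Seqs.
Variables (R : realType) (d : nat).
Notation pt := 'rV[R]_d.
Implicit Types u v w x y z a b c : pt.

Lemma path_len1 a : path_len [:: a] = 0 :> R.
Proof. by rewrite /path_len /= big_nil. Qed.

Lemma path_len_cons a b s :
  path_len (a :: b :: s) = enorm (a - b) + path_len (b :: s) :> R.
Proof. by rewrite /path_len /= big_cons. Qed.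

Lemma path_len_ge0 (s : seq pt) : 0 <= path_len s :> R.
Proof. by apply: sumr_ge0 => e _; apply: enorm_ge0. Qed.

Lemma path_len_rcons a s c :
  path_len (a :: rcons s c) = path_len (a :: s) + enorm (last a s - c) :> R.
Proof.
elim: s a => [|b s IH] a /=; first by rewrite path_len_cons !path_len1 add0r addr0.
by rewrite path_len_cons IH path_len_cons addrA.
Qed.

Lemma mem_bound a s z : z \in a :: s -> enorm (z - a) <= path_len (a :: s).
Proof.
elim: s a => [|b s IH] a.
  by rewrite inE => /eqP ->; rewrite subrr path_len1 /enorm /dotp big1 ?sqrtr0 // => i _; rewrite mxE mul0r.
rewrite in_cons => /orP [/eqP ->|hz].
  by rewrite subrr /enorm /dotp big1 ?sqrtr0 ?path_len_ge0 // => i _; rewrite mxE mul0r.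
rewrite path_len_cons; apply: le_trans (enorm_tri z b a) _.
by rewrite addrC enormB lerD2l IH.
Qed.

Lemma zip_sub a s c e :
  e \in zip (a :: s) s -> e \in zip (a :: rcons s c) (rcons s c).
Proof.
elim: s a => [|b s IH] a //=.
rewrite !in_cons => /orP [->//|h]; by rewrite (IH b h) orbT.
Qed.

Lemma mem_zip_pair (T : eqType) (s1 s2 : seq T) p q :
  (p, q) \in zip s1 s2 -> (p \in s1) && (q \in s2).
Proof.
elim: s1 s2 => [|x s1 IH] [|y s2] //=.
rewrite in_cons => /orP [/eqP [-> ->]|h]; first by rewrite !inE !eqxx.
by have /andP [h1 h2] := IH _ h; rewrite !in_cons h1 h2 !orbT.
Qed.

Lemma path_zip (T : eqType) (r : rel T) (a : T) (s : seq T) :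
  path r a s -> forall e, e \in zip (a :: s) s -> r e.1 e.2.
Proof.
elim: s a => [|b s IH] a //= /andP [hab hp] e.
by rewrite in_cons => /orP [/eqP ->//|h]; apply: IH hp e h.
Qed.

Lemma bigmin_le (F : pt -> R) (c : R) (s : seq pt) v : v \in s ->
  \big[Order.min/c]_(w <- s) F w <= F v.
Proof.
elim: s => // a s IH; rewrite in_cons big_cons ge_min => /orP [/eqP ->|h].
  by rewrite lexx.
by rewrite IH ?orbT.
Qed.

Lemma bigmin_attain (F : pt -> R) (c : R) (s : seq pt) :
  \big[Order.min/c]_(w <- s) F w = c \/
  exists2 v, v \in s & \big[Order.min/c]_(w <- s) F w = F v.
Proof.
elim: s => [|a s IH]; first by left; rewrite big_nil.
rewrite big_cons minEle; case: ifP => _; first by right; exists a; rewrite ?inE ?eqxx.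
case: IH => [->|[v hv ->]]; first by left.
by right; exists v; rewrite // in_cons hv orbT.
Qed.

Lemma dist_le x V v : v \in V -> dist_set x V <= enorm (x - v).
Proof. exact: bigmin_le. Qed.

Lemma dist_attain x V : V != [::] ->
  exists2 w, w \in V & dist_set x V = enorm (x - w).
Proof.
case: V => // v V _; rewrite /dist_set /=.
case: (bigmin_attain (fun w => enorm (x - w)) (enorm (x - v)) (v :: V)) => [->|[w hw ->]].
  by exists v; rewrite ?inE ?eqxx.
by exists w.
Qed.

Lemma dist_ge0 x V : 0 <= dist_set x V.
Proof.
case: (V =P [::]) => [->|/eqP hV]; first by rewrite /dist_set big_nil enorm_ge0.
by have [w _ ->] := dist_attain x hV; apply: enorm_ge0.
Qed.

Lemma dist_lip x x' V : V != [::] -> dist_set x' V <= dist_set x V + enorm (x' - x).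
Proof.
move=> hV; have [w hw ->] := dist_attain x hV.
apply: le_trans (dist_le x' hw) _.
have := enorm_tri x' x w; lra.
Qed.

Lemma sum_sub (L E : seq (pt * pt)) (F : pt * pt -> R) :
  (forall e, 0 <= F e) -> uniq L -> uniq E -> {subset L <= E} ->
  \sum_(e <- L) F e <= \sum_(e <- E) F e.
Proof.
move=> F0 uL uE sLE.
rewrite [X in _ <= X](bigID (fun e => e \in L)) /=.
have -> : \sum_(i <- E | i \in L) F i = \sum_(e <- L) F e.
  rewrite -big_filter; apply: perm_big; apply: uniq_perm; rewrite ?filter_uniq //.
  by move=> e; rewrite mem_filter; case eL: (e \in L) => //=; rewrite sLE.
by rewrite lerDl sumr_ge0.
Qed.

Definition gsw (E : seq (pt * pt)) (e : pt * pt) := if e \in E then e else (e.2, e.1).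

Lemma uniq_gsw E a s : uniq (a :: s) -> uniq (map (gsw E) (zip (a :: s) s)).
Proof.
elim: s a => [|b s IH] a //= /andP [ha hu].
rewrite (IH b hu) andbT.
apply/mapP => -[[p q] hpq].
have /andP [hp hq] := mem_zip_pair hpq.
have hq' : q \in b :: s by rewrite in_cons hq orbT.
rewrite /gsw; case: ifP => _; case: ifP => _ [] => h1 h2 //.
all: subst; case/negP: ha.
- exact: hp.
- exact: hq'.
- exact: hq'.
- exact: hp.
Qed.

Lemma walk_le (E : seq (pt * pt)) a s : uniq E ->
  path (adj E) a s -> uniq (a :: s) ->
  path_len (a :: s) <= \sum_(e <- E) enorm (e.1 - e.2).
Proof.
move=> uE hp hu.
have -> : path_len (a :: s) = \sum_(e <- map (gsw E) (zip (a :: s) s)) enorm (e.1 - e.2).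
  rewrite big_map /path_len /=; apply: eq_bigr => e _.
  by rewrite /gsw; case: ifP => //= _; rewrite enormB.
apply: sum_sub => //; first by move=> e; apply: enorm_ge0.
  exact: uniq_gsw.
move=> e /mapP [f hf ->]; have := path_zip hp hf.
case: f hf => p q hf; rewrite /adj /gsw /=; case: ifP => //= hh.

Qed.
End Seqs.

Section More.
Variables (R : realType) (d : nat).
Notation pt := 'rV[R]_d.

Lemma enorm_gt0 (u : pt) : u != 0 -> 0 < enorm u.
Proof.
move=> hu; rewrite lt_def enorm_ge0 andbT; apply/eqP => h0.
have h : dotp u u = 0 by rewrite -enorm_sq h0 expr0n.
have hi := @psumr_eq0P _ _ xpredT (fun i => u 0 i ^+ 2) (fun i _ => sqr_ge0 _).
move/eqP: hu; apply; apply/rowP => i; rewrite mxE.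
have hs : \sum_(i | xpredT i) u 0 i ^+ 2 = 0.
  by rewrite -[RHS]h /dotp; apply: eq_big => // j; rewrite expr2.
have := hi hs i isT.
by move/eqP; rewrite sqrf_eq0 => /eqP.
Qed.

Lemma dotp_self0 (u w : pt) : dotp (u - u) w = 0.
Proof. by rewrite dotpBl subrr. Qed.

Definition rnd (v : pt) : pt := \row_i ((Num.floor (v 0 i))%:~R).

Lemma rnd_lattice v : is_lattice (rnd v).
Proof. by apply/forallP => i; rewrite mxE intr_int. Qed.

Lemma rnd_err v : enorm (rnd v - v) <= d%:R.
Proof.
apply: enorm_le_sq => //.
apply: (@le_trans _ _ (\sum_(i < d) (1 : R))).
  apply: ler_sum => i _; rewrite !mxE.
  have /andP [h1 h2] := floor_itv (v 0 i).
  rewrite intrD in h2; set f := (Num.floor (v 0 i))%:~R in h1 h2 *.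
  nra.
rewrite sumr_const card_ord -natrX ler_nat; case: d => // n.
by rewrite expnS leq_pmulr.
Qed.

Lemma conn_bound (E : seq (pt * pt)) a s : uniq E -> path (adj E) a s ->
  enorm (last a s - a) <= \sum_(e <- E) enorm (e.1 - e.2).
Proof.
move=> uE hp; case: (shortenP hp) => p' hp' hu _.
apply: le_trans (mem_bound (mem_last a p')) _.
exact: walk_le.
Qed.
End More.

Unset Implicit Arguments. Set Strict Implicit.

Theorem lemma5p8 (R : realType) (d : nat) (hd : (2 <= d)%N) (eps : R)
  (heps0 : 0 < eps) (heps1 : eps < 1 / 8) :
  exists L : R, forall l : R, 0 < l -> L <= l ->
  forall (x y : 'rV[R]_d), cball 0 (2 * l) x -> cball 0 (2 * l) y -> x != y ->
  forall l' : R, enorm (x - y) <= l' -> l' <= 2 * l ->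
  (exists xh yh : 'rV[R]_d,
     [/\ cball 0 (3 * l) xh && is_lattice xh, cball 0 (3 * l) yh && is_lattice yh,
         enorm (x - y) <= enorm (xh - yh) &
         forall p, inP1 x y l' p ->
           exists q, inP1 xh yh (l' + 8 * eps * l) q /\ path_incl p q])
  /\
  (exists xh yh : 'rV[R]_d,
     [/\ cball 0 (3 * l) xh && is_lattice xh, cball 0 (3 * l) yh && is_lattice yh,
         enorm (x - y) <= enorm (xh - yh) &
         forall A, inA1 x y l' A ->
           exists B, inA1 xh yh (l' + 8 * eps * l) B /\ animal_incl A B]).
Proof.
set D : R := d%:R.
have D0 : 0 <= D by rewrite /D ler0n.
have e2 : 0 < eps ^+ 2 by rewrite exprn_gt0.
exists (2 * (D + 1) / eps ^+ 2) => l l0 hL x y hx hy hxy l' hl'1 hl'2.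
have key : 2 * (D + 1) <= eps ^+ 2 * l.
  have h := ler_wpM2r (ltW e2) hL.
  rewrite divfK ?gt_eqF // in h; lra.
have eps8 : 8 * eps ^+ 2 <= eps by rewrite expr2; nra.
set t := 2 * eps * l.
have tdef : t = 2 * eps * l by [].
have el : 8 * eps ^+ 2 * l <= eps * l by apply: ler_wpM2r; lra.
have tD : 32 * (D + 1) <= t by rewrite /t; lra.
have lD : 128 * (D + 1) <= l.
  have : eps ^+ 2 * l <= (1 / 64) * l.
    apply: ler_wpM2r; first lra.
    rewrite expr2; have : eps * eps <= eps * (1 / 8) by apply: ler_wpM2l; lra.
    lra.
  lra.
have tl : t <= l / 4.
  have : eps * l <= 1 / 8 * l by apply: ler_wpM2r; lra.
  rewrite /t; lra.
have hq : D * (4 * l) <= t ^+ 2 - 2 * t * D - D ^+ 2.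
  have : t ^+ 2 = 4 * l * (eps ^+ 2 * l) by rewrite /t; ring.
  nra.
set n := enorm (x - y).
have hl'n : n <= l' by [].
have n0 : 0 < n by apply: enorm_gt0; rewrite subr_eq0.
set u := n^-1 *: (x - y).
have hu : x - y = n *: u by rewrite /u scalerA mulfV ?gt_eqF // scale1r.
have u1 : dotp u u = 1.
  rewrite /u dotpZl dotpZr -enorm_sq -/n; field; lra.
have nu1 : enorm u = 1 by rewrite /enorm u1 sqrtr1.
have hu' : y - x = n *: (- u) by rewrite scalerN -hu opprB.
have u1' : dotp (- u) (- u) = 1 by rewrite dotpNl dotpNr opprK.
set xh := rnd (x + t *: u).
set yh := rnd (y - t *: u).
have ex : enorm (xh - (x + t *: u)) <= D by apply: rnd_err.
have ey : enorm (yh - (y - t *: u)) <= D by apply: rnd_err.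
have tu : enorm (t *: u) = t by rewrite enormZ nu1 mulr1 ger0_norm //; lra.
have dx : enorm (xh - x) <= t + D.
  have := enormD (xh - (x + t *: u)) (t *: u).
  have -> : xh - (x + t *: u) + t *: u = xh - x by apply/rowP => i; rewrite !mxE; lra.
  lra.
have dy : enorm (yh - y) <= t + D.
  have := enormD (yh - (y - t *: u)) (- (t *: u)).
  have -> : yh - (y - t *: u) + - (t *: u) = yh - y by apply/rowP => i; rewrite !mxE; lra.
  rewrite enormN; lra.
have bx : cball 0 (3 * l) xh && is_lattice xh.
  rewrite rnd_lattice andbT /cball subr0.
  move: hx; rewrite /cball subr0 => hx.
  have := enormD (xh - x) x; rewrite subrK; lra.
have byy : cball 0 (3 * l) yh && is_lattice yh.
  rewrite rnd_lattice andbT /cball subr0.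
  move: hy; rewrite /cball subr0 => hy.
  have := enormD (yh - y) y; rewrite subrK; lra.
have hn : n <= enorm (xh - yh).
  have := enormD (xh - yh) (- ((xh - (x + t *: u)) - (yh - (y - t *: u)))).
  have -> : xh - yh + - (xh - (x + t *: u) - (yh - (y - t *: u))) = (n + 2 * t) *: u.
    apply/rowP => i; have := congr1 (fun v : 'rV_d => v 0 i) hu.
    rewrite !mxE => hi; lra.
  rewrite enormZ nu1 mulr1 ger0_norm; last lra.
  rewrite enormN; have := enormD (xh - (x + t *: u)) (- (yh - (y - t *: u))).
  rewrite enormN; lra.
have hD1 : forall z, D1 x y z -> enorm (z - x) <= 2 * l -> D1 xh yh z.
  move=> z /andP [h1 h2] hz; apply/andP; split.
    apply: (half_D1 (M := 4 * l) n0 hu u1 ex ey) => //; lra.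
  apply: (half_D1 (x := y) (y := x) (xh := yh) (yh := xh) (u := - u) (t := t) (del := D) (M := 4 * l) n0 hu' u1').
  - by rewrite scalerN.
  - by rewrite scalerN opprK.
  - have := enorm_tri z x y; rewrite -/n; lra.
  - by [].
  - by [].
  - lra.
  - by [].
have hxx : D1 xh yh xh.
  by rewrite /D1 dotp_self0 lexx /= dotp_ge0.
have hyy : D1 xh yh yh.
  by rewrite /D1 dotp_self0 lexx andbT dotp_ge0.
split.
  exists xh, yh; split => // p [[hp0 hph hpl hplen] hpD].
  case: p hp0 hph hpl hplen hpD => // a s _ /= -> hpl hplen hpD.
  exists (xh :: rcons (x :: s) yh); split; last split.
  - split; last first.
      rewrite /= hxx /=; change (all (D1 xh yh) (rcons (x :: s) yh)).
      rewrite all_rcons hyy andTb; apply/allP => z hz.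
      apply: hD1; first by apply: (allP (hpD : all (D1 x y) (x :: s))).
      have := mem_bound hz; lra.
    split => //=; first by rewrite last_rcons.
    rewrite path_len_cons path_len_rcons hpl.
    rewrite (enormB y yh); lra.
  - move=> z hz; rewrite in_cons; apply/orP; right; change (z \in rcons (x :: s) yh).
    by rewrite mem_rcons in_cons hz orbT.
  - move=> e he; left; rewrite /path_edges /= in_cons.
    by rewrite zip_sub ?orbT.
exists xh, yh; split => // A [[hA hlen] hAD]; exists A; split; last first.
  by split => // -[p q] he; rewrite /adj /= he.
split; last first.
  apply/allP => z hz.
  case: hlen => [hV|hlen]; first by rewrite hV in hz.
  apply: hD1; first by apply: (allP hAD).
  have hV : aV A != [::] by case: (aV A) hz.
  have [w hw hdw] := dist_attain x hV.
  case: hA => _ _ [uE _] hc.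
  have [s [hps hls]] := hc w z hw hz.
  have hb := conn_bound uE hps; rewrite hls in hb.
  have := enorm_tri z w x; rewrite (enormB w x) -hdw.
  have := dist_ge0 y (aV A).
  rewrite /animal_len in hlen; lra.
split => //; case: (aV A =P [::]) => [hV|/eqP hV]; first by left.
right; case: hlen => [hV'|hlen]; first by rewrite hV' in hV.
have := dist_lip x xh hV; have := dist_lip y yh hV.
lra.
Qed.
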